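(* Let $A=\{a_n\}_{n\in\mathbb Z}\subset\mathbb R$ be an almost periodic set of density $d$ such that $a_n\le a_{n+1}$ for all $n\in\mathbb Z$. Then $$a_n=n/d+\phi(n),\qquad n\in\mathbb Z,$$ with an almost periodic mapping $\phi:\mathbb Z\to\mathbb R$.
   Context: A discrete locally finite multiset $A=\{a_n\}_{n\in\mathbb Z}\subset\mathbb R$ (a point may occur several times in the sequence) is called almost periodic if for every $\varepsilon>0$ the set $$E_\varepsilon=\{\tau\in\mathbb R:\ \exists\text{ a bijection }\sigma:\mathbb Z\to\mathbb Z\text{ with }\sup_n|a_n+\tau-a_{\sigma(n)}|<\varepsilon\}$$ is relatively dense, i.e. there is $L_\varepsilon>0$ with $E_\varepsilon\cap(x,x+L_\varepsilon)\ne\emptyset$ for every $x\in\mathbb R$. For such $A$ there exists the density $d=\lim_{l(I)\to\infty}\#(A\cap I)/l(I)>0$, the limit taken over half-intervals $I$ with length $l(I)\to\infty$, where $\#(A\cap I)$ counts points with multiplicity. A mapping $\phi:\mathbb Z\to\mathbb R$ is almost periodic if for every $\varepsilon>0$ the set of integers $h$ with $\sup_{n\in\mathbb Z}|\phi(n+h)-\phi(n)|<\varepsilon$ is relatively dense in $\mathbb Z$ (meets every interval of some fixed length $L_\varepsilon$). *)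

(* Defs.v *)
From Stdlib Require Import Reals Lra Lia ZArith List.
Open Scope R_scope.

Definition bijZ (sigma : Z -> Z) : Prop :=
  exists sinv : Z -> Z, (forall n, sinv (sigma n) = n) /\ (forall n, sigma (sinv n) = n).

Definition locally_finite (a : Z -> R) : Prop :=
  forall x y : R, exists N : Z, forall n : Z, x <= a n <= y -> (Z.abs n <= N)%Z.

Definition sup_lt (f : Z -> R) (eps : R) : Prop :=
  exists c : R, c < eps /\ forall n : Z, Rabs (f n) <= c.

Definition almost_period (a : Z -> R) (eps tau : R) : Prop :=
  exists sigma : Z -> Z, bijZ sigma /\ sup_lt (fun n => a n + tau - a (sigma n)) eps.

Definition almost_periodic_set (a : Z -> R) : Prop :=
  locally_finite a /\
  forall eps : R, 0 < eps ->
    exists L : R, 0 < L /\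
      forall x : R, exists tau : R, x < tau < x + L /\ almost_period a eps tau.

(* #(A ∩ [alpha, beta)) = k, counted with multiplicity (number of indices) *)
Definition count_in (a : Z -> R) (alpha beta : R) (k : nat) : Prop :=
  exists l : list Z, NoDup l /\ length l = k /\
    forall n : Z, In n l <-> (alpha <= a n /\ a n < beta).

Definition has_density (a : Z -> R) (d : R) : Prop :=
  forall eps : R, 0 < eps ->
    exists L0 : R, forall (alpha beta : R) (k : nat),
      beta - alpha > L0 -> count_in a alpha beta k ->
      Rabs (INR k / (beta - alpha) - d) < eps.

Definition almost_periodic_map (phi : Z -> R) : Prop :=
  forall eps : R, 0 < eps ->
    exists L : Z, (0 < L)%Z /\
      forall m : Z, exists h : Z, (m <= h < m + L)%Z /\
        sup_lt (fun n => phi (n + h)%Z - phi n) eps.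

(* Main.v *)
Require Import Defs.
From Stdlib Require Import Reals ZArith.
From Stdlib Require Import Lra Lia List IndefiniteDescription Classical.
Open Scope R_scope.

Lemma Rabs_bnd (z e : R) : Rabs z <= e -> - e <= z <= e.
Proof. unfold Rabs; destruct (Rcase_abs z); lra. Qed.

Lemma mono_a (a : Z -> R) : (forall n : Z, a n <= a (n + 1)%Z) ->
  forall n m, (n <= m)%Z -> a n <= a m.
Proof.
  intros Hm n m Hnm.
  assert (Hk : forall k : nat, a n <= a (n + Z.of_nat k)%Z).
  { induction k.
    - rewrite Z.add_0_r; lra.
    - eapply Rle_trans; [apply IHk|].
      replace (n + Z.of_nat (S k))%Z with ((n + Z.of_nat k) + 1)%Z by lia.
      apply Hm. }
  replace m with (n + Z.of_nat (Z.to_nat (m - n)))%Z by lia. apply Hk.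
Qed.

Lemma zmax (P : Z -> Prop) : (exists m, P m) -> (exists B, forall m, P m -> (m <= B)%Z) ->
  exists m0, P m0 /\ forall m, P m -> (m <= m0)%Z.
Proof.
  intros [m Pm] [B HB].
  assert (C : forall k : nat, forall m, P m -> (B - m <= Z.of_nat k)%Z ->
     exists m0, P m0 /\ forall m, P m -> (m <= m0)%Z).
  { induction k; intros m1 P1 Hk.
    - exists m1; split; auto. intros m' Pm'. specialize (HB m' Pm'). lia.
    - destruct (classic (exists m', P m' /\ (m1 < m')%Z)) as [[m' [Pm' Hlt]]|Hno].
      + apply (IHk m' Pm'). lia.
      + exists m1; split; auto. intros m' Pm'.
        destruct (Z_le_gt_dec m' m1); auto. exfalso; apply Hno; exists m'; split; auto; lia. }
  apply (C (Z.to_nat (B - m)) m Pm). lia.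
Qed.

Lemma zmin (P : Z -> Prop) : (exists m, P m) -> (exists B, forall m, P m -> (B <= m)%Z) ->
  exists m0, P m0 /\ forall m, P m -> (m0 <= m)%Z.
Proof.
  intros [m Pm] [B HB].
  destruct (zmax (fun k => P (- k)%Z)) as [k [Pk Hk]].
  - exists (- m)%Z. rewrite Z.opp_involutive; auto.
  - exists (- B)%Z. intros k Pk. specialize (HB _ Pk). lia.
  - exists (- k)%Z. split; auto. intros m' Pm'.
    assert (P (- - m')%Z) by (rewrite Z.opp_involutive; auto).
    specialize (Hk _ H). lia.
Qed.

Definition ispec (a : Z -> R) (i : R -> Z) : Prop :=
  forall x m, x <= a m <-> (i x <= m)%Z.

Lemma i_exists (a : Z -> R) : locally_finite a -> (forall n : Z, a n <= a (n + 1)%Z) ->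
  exists i, ispec a i.
Proof.
  intros LF Hm. pose proof (mono_a a Hm) as Mo.
  destruct (functional_choice (fun x k => forall m, x <= a m <-> (k <= m)%Z)) as [f Hf];
    [| exists f; exact Hf].
  intro x.
  assert (Up : exists m, x <= a m).
  { apply NNPP; intro Hn.
    destruct (LF (a 0%Z) x) as [N HN].
    assert (Hle : (Z.abs (Z.abs N + 1) <= N)%Z).
    { apply HN. split. apply Mo; lia.
      destruct (Rle_dec (a (Z.abs N + 1)%Z) x); auto.
      exfalso; apply Hn; exists (Z.abs N + 1)%Z; lra. }
    lia. }
  assert (Lo : exists m, a m < x).
  { apply NNPP; intro Hn.
    destruct (LF x (a 0%Z)) as [N HN].
    assert (Hle : (Z.abs (- (Z.abs N + 1)) <= N)%Z).
    { apply HN. split. 2: apply Mo; lia.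
      destruct (Rle_dec x (a (- (Z.abs N + 1))%Z)); auto.
      exfalso; apply Hn; exists (- (Z.abs N + 1))%Z; lra. }
    lia. }
  destruct Lo as [m0 Hm0].
  destruct (zmin (fun m => x <= a m) Up) as [k [Pk Hk]].
  { exists m0. intros m Pm. destruct (Z_le_gt_dec m0 m); auto.
    assert (a m <= a m0) by (apply Mo; lia). lra. }
  exists k. intro m. split; auto.
  intro. eapply Rle_trans; [apply Pk| apply Mo; auto].
Qed.

Lemma i_mono a i : ispec a i -> forall x y, x <= y -> (i x <= i y)%Z.
Proof.
  intros S x y Hxy. apply S. eapply Rle_trans; [apply Hxy|]. apply S. lia.
Qed.

Definition zr (p : Z) (n : nat) : list Z := map (fun k => (p + Z.of_nat k)%Z) (seq 0 n).

Lemma zr_In p n m : In m (zr p n) <-> (p <= m < p + Z.of_nat n)%Z.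
Proof.
  unfold zr. rewrite in_map_iff. split.
  - intros [k [<- Hk]]. apply in_seq in Hk. lia.
  - intros H. exists (Z.to_nat (m - p)). split. lia. apply in_seq. lia.
Qed.

Lemma zr_NoDup p n : NoDup (zr p n).
Proof.
  unfold zr. apply NoDup_map_NoDup_ForallPairs; [|apply seq_NoDup].
  intros x y _ _ H. lia.
Qed.

Lemma zr_length p n : length (zr p n) = n.
Proof. unfold zr. rewrite length_map, length_seq. reflexivity. Qed.

Lemma PH (f : Z -> Z) p q r s : (forall u v, f u = f v -> u = v) -> (p <= q)%Z -> (r <= s)%Z ->
  (forall m, (p <= m < q)%Z -> (r <= f m < s)%Z) -> (q - p <= s - r)%Z.
Proof.
  intros Inj Hpq Hrs0 Hm.
  destruct (Z.eq_dec p q) as [<-|Hne]; [lia|].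
  assert (Hrs : (r < s)%Z) by (specialize (Hm p); lia).
  pose proof (@NoDup_incl_length Z (map f (zr p (Z.to_nat (q - p)))) (zr r (Z.to_nat (s - r)))) as HL.
  rewrite length_map, !zr_length in HL.
  enough (Z.to_nat (q - p) <= Z.to_nat (s - r))%nat by lia.
  apply HL.
  - apply NoDup_map_NoDup_ForallPairs; [|apply zr_NoDup].
    intros x y _ _ H; auto.
  - intros y Hy. apply in_map_iff in Hy. destruct Hy as [m [<- Hmi]].
    apply zr_In in Hmi. apply zr_In. specialize (Hm m). lia.
Qed.

Lemma CL a i f t e : ispec a i -> (forall u v, f u = f v -> u = v) ->
  (forall m, Rabs (a (f m) - a m - t) <= e) ->
  forall x y x' y', x <= y -> x' = x + t - e -> y' = y + t + e ->
  (i y - i x <= i y' - i x')%Z.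
Proof.
  intros S Inj Hb x y x' y' Hxy -> ->.
  pose proof (Rabs_pos (a (f 0%Z) - a 0%Z - t)) as Q0. pose proof (Hb 0%Z) as Q1.
  apply (PH f); auto. apply (i_mono a i S); auto. apply (i_mono a i S); lra.
  intros m Hm.
  assert (H1 : x <= a m) by (apply S; lia).
  assert (H2 : a m < y).
  { destruct (Rlt_dec (a m) y); auto. exfalso. assert (y <= a m) by lra.
    apply S in H. lia. }
  pose proof (Rabs_bnd _ _ (Hb m)).
  split.
  - apply S. lra.
  - destruct (Z_lt_le_dec (f m) (i (y + t + e)%R)); auto.
    apply S in l. lra.
Qed.

Lemma KEY a i e tau : ispec a i -> 0 < e -> almost_period a e tau ->
  exists H, (forall x, (i (x + tau - e)%R <= i x + H)%Z) /\
            (forall x, (i x + H <= i (x + tau + 5 * e)%R)%Z).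
Proof.
  intros S He [sg [[sinv [H1 H2]] [c [Hc Hb]]]].
  assert (Inj1 : forall u v, sg u = sg v -> u = v).
  { intros u v E. rewrite <- (H1 u), <- (H1 v), E; auto. }
  assert (Inj2 : forall u v, sinv u = sinv v -> u = v).
  { intros u v E. rewrite <- (H2 u), <- (H2 v), E; auto. }
  assert (B1 : forall m, Rabs (a (sg m) - a m - tau) <= e).
  { intro m. replace (a (sg m) - a m - tau) with (- (a m + tau - a (sg m))) by ring.
    rewrite Rabs_Ropp. specialize (Hb m). simpl in Hb. lra. }
  assert (B2 : forall m, Rabs (a (sinv m) - a m - - tau) <= e).
  { intro m. specialize (Hb (sinv m)). simpl in Hb. rewrite H2 in Hb.
    replace (a (sinv m) - a m - - tau) with (a (sinv m) + tau - a m) by ring. lra. }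
  pose proof (CL a i sg tau e S Inj1 B1) as A.
  pose proof (CL a i sinv (-tau) e S Inj2 B2) as B.
  pose proof (i_mono a i S) as Mi.
  assert (PQ : forall v z, (v <= z \/ z <= v - 2 * e) ->
     (i (v + tau - e)%R - i v <= i (z + tau + e)%R - i z)%Z).
  { intros v z [Hc1|Hc2].
    - pose proof (A v z (v + tau - e) (z + tau + e) Hc1 eq_refl eq_refl). lia.
    - assert (E1 : z + tau + e <= v + tau - e) by lra.
      pose proof (B (z + tau + e) (v + tau - e) z v E1 ltac:(lra) ltac:(lra)). lia. }
  assert (PQ' : forall v w,
     (i (v + tau - e)%R - i v <= i (w + tau + 3 * e)%R - i (w - 2 * e)%R)%Z).
  { intros v w. destruct (Rle_dec v (w + 2 * e)).
    - pose proof (PQ v (w + 2 * e) (or_introl r)).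
      assert (i (w + 2 * e + tau + e)%R <= i (w + tau + 3 * e)%R)%Z by (apply Mi; lra).
      assert (i (w - 2 * e)%R <= i (w + 2 * e)%R)%Z by (apply Mi; lra). lia.
    - apply Rnot_le_lt in n. assert (Hw : w <= v - 2 * e) by lra. pose proof (PQ v w (or_intror Hw)).
      assert (i (w + tau + e)%R <= i (w + tau + 3 * e)%R)%Z by (apply Mi; lra).
      assert (i (w - 2 * e)%R <= i w)%Z by (apply Mi; lra). lia. }
  destruct (zmax (fun k => exists v, i (v + tau - e)%R - i v = k)%Z) as [Hh [[v0 Hv0] Hmax]].
  - exists (i (0 + tau - e)%R - i 0%R)%Z. exists 0; auto.
  - exists (i (0 + tau + 3 * e)%R - i (0 - 2 * e)%R)%Z. intros k [v <-]. apply PQ'.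
  - exists Hh. split.
    + intro x. assert (i (x + tau - e)%R - i x <= Hh)%Z by (apply Hmax; exists x; auto). lia.
    + intro x. pose proof (PQ' v0 (x + 2 * e)).
      replace (x + 2 * e + tau + 3 * e) with (x + tau + 5 * e) in H by ring.
      replace (x + 2 * e - 2 * e) with x in H by ring. lia.
Qed.

Lemma nat_unb (r : R) : exists k : nat, r < INR k.
Proof.
  destruct (archimed r) as [H _].
  exists (Z.to_nat (up r)). rewrite INR_IZR_INZ.
  destruct (Z_le_gt_dec 0 (up r)).
  - rewrite Z2Nat.id; auto.
  - replace (Z.to_nat (up r)) with 0%nat by lia. assert (Hg : (up r < 0)%Z) by lia. apply IZR_lt in Hg. simpl in *. lra.
Qed.

Lemma count_i a i : ispec a i -> forall al be, al <= be ->
  count_in a al be (Z.to_nat (i be - i al)).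
Proof.
  intros S al be Hab. exists (zr (i al) (Z.to_nat (i be - i al))).
  split; [apply zr_NoDup|]. split; [apply zr_length|].
  intros n. rewrite zr_In.
  assert (i al <= i be)%Z by (apply (i_mono a i S); auto).
  rewrite Z2Nat.id by lia.
  split.
  - intros Hn. split. apply S; lia.
    destruct (Rlt_dec (a n) be); auto. assert (be <= a n) by lra. apply S in H0. lia.
  - intros [Ha Hb]. apply S in Ha. split; auto.
    destruct (Z_lt_le_dec n (i be)). lia. apply S in l. lra.
Qed.

Lemma INR_toZ z : (0 <= z)%Z -> INR (Z.to_nat z) = IZR z.
Proof. intro. rewrite INR_IZR_INZ, Z2Nat.id; auto. Qed.

Lemma DENS a i d H s : has_density a d -> ispec a i ->
  (forall x, (i x + H <= i (x + s)%R)%Z) -> IZR H <= d * s.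
Proof.
  intros Hd S Hs.
  assert (It : forall k : nat, forall x, (i x + Z.of_nat k * H <= i (x + INR k * s)%R)%Z).
  { induction k; intro x.
    - simpl. replace (x + 0 * s) with x by ring. lia.
    - pose proof (IHk x). pose proof (Hs (x + INR k * s)).
      rewrite S_INR. replace (x + (INR k + 1) * s) with (x + INR k * s + s) by ring. lia. }
  pose proof (i_mono a i S) as Mi.
  destruct (Rtotal_order s 0) as [Hneg|[H0|Hpos]].
  -
    destruct (Rle_dec (IZR H) (d * s)) as [ok|nok]; auto. exfalso.
    assert (Hlt : IZR H / s < d).
    { apply Rnot_le_lt in nok.
      apply (Rmult_lt_reg_r (- s)); [lra|].
      replace (IZR H / s * - s) with (- IZR H) by (field; lra). lra. }
    destruct (Hd (d - IZR H / s) ltac:(lra)) as [L0 HL].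
    destruct (nat_unb ((Rabs L0 + 1) / (- s))) as [k Hk].
    assert (Hk' : Rabs L0 + 1 < INR k * - s).
    { apply (Rmult_lt_compat_r (- s)) in Hk; [|lra].
      replace ((Rabs L0 + 1) / - s * - s) with (Rabs L0 + 1) in Hk by (field; lra). lra. }
    pose proof (Rle_abs L0). pose proof (Rabs_pos L0).
    assert (Hks : INR k * s < 0) by (replace (INR k * s) with (- (INR k * - s)) by ring; lra).
    pose proof (count_i a i S (INR k * s) 0 ltac:(lra)) as C.
    assert (Hlen : 0 - INR k * s > L0) by lra.
    specialize (HL _ _ _ Hlen C).
    pose proof (It k 0) as Itk. replace (0 + INR k * s) with (INR k * s) in Itk by ring.
    assert (i (INR k * s)%R <= i 0%R)%Z by (apply Mi; lra).
    rewrite INR_toZ in HL by lia.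
    apply Rabs_def2 in HL. destruct HL as [_ HL].
    set (K := IZR (i 0%R - i (INR k * s)%R)) in *.
    assert (HK : K <= - (INR k * IZR H)).
    { unfold K. replace (INR k * IZR H) with (IZR (Z.of_nat k * H)) by (rewrite mult_IZR, <- INR_IZR_INZ; ring).
      rewrite <- opp_IZR. apply IZR_le. lia. }
    assert (H3 : K / (0 - INR k * s) > IZR H / s) by lra.
    apply (Rmult_gt_compat_r (0 - INR k * s)) in H3; [|lra].
    replace (K / (0 - INR k * s) * (0 - INR k * s)) with K in H3 by (field; repeat split; intro Hz; nra).
    replace (IZR H / s * (0 - INR k * s)) with (- (INR k * IZR H)) in H3 by (field; repeat split; intro Hz; nra).
    lra.
  - subst s. pose proof (Hs 0). replace (0 + 0) with 0 in H0 by ring.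
    replace (d * 0) with 0 by ring. apply IZR_le. lia.
  - destruct (Rle_dec (IZR H) (d * s)) as [ok|nok]; auto. exfalso.
    assert (Hlt : d < IZR H / s).
    { apply Rnot_le_lt in nok.
      apply (Rmult_lt_reg_r s); [lra|].
      replace (IZR H / s * s) with (IZR H) by (field; lra). lra. }
    destruct (Hd (IZR H / s - d) ltac:(lra)) as [L0 HL].
    destruct (nat_unb ((Rabs L0 + 1) / s)) as [k Hk].
    assert (Hk' : Rabs L0 + 1 < INR k * s).
    { apply (Rmult_lt_compat_r s) in Hk; [|lra].
      replace ((Rabs L0 + 1) / s * s) with (Rabs L0 + 1) in Hk by (field; lra). lra. }
    pose proof (Rle_abs L0). pose proof (Rabs_pos L0).
    pose proof (count_i a i S 0 (INR k * s) ltac:(lra)) as C.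
    assert (Hlen : INR k * s - 0 > L0) by lra.
    specialize (HL _ _ _ Hlen C).
    pose proof (It k 0) as Itk. replace (0 + INR k * s) with (INR k * s) in Itk by ring.
    assert (i 0%R <= i (INR k * s)%R)%Z by (apply Mi; lra).
    rewrite INR_toZ in HL by lia.
    apply Rabs_def2 in HL. destruct HL as [HL _].
    set (K := IZR (i (INR k * s)%R - i 0%R)) in *.
    assert (HK : INR k * IZR H <= K).
    { unfold K. replace (INR k * IZR H) with (IZR (Z.of_nat k * H)) by (rewrite mult_IZR, <- INR_IZR_INZ; ring).
      apply IZR_le. lia. }
    assert (H9 : K / (INR k * s - 0) < IZR H / s) by lra.
    apply (Rmult_lt_compat_r (INR k * s - 0)) in H9; [|lra].
    replace (K / (INR k * s - 0) * (INR k * s - 0)) with K in H9 by (field; repeat split; intro Hz; nra).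
    replace (IZR H / s * (INR k * s - 0)) with (INR k * IZR H) in H9 by (field; repeat split; intro Hz; nra).
    lra.
Qed.

Lemma DENS2 a i d H s : has_density a d -> ispec a i ->
  (forall x, (i (x + s)%R <= i x + H)%Z) -> d * s <= IZR H.
Proof.
  intros Hd S Hs.
  assert (IZR (- H) <= d * (- s)).
  { apply (DENS a i d); auto. intro x. pose proof (Hs (x + - s)).
    replace (x + - s + s) with x in H0 by ring. lia. }
  rewrite opp_IZR in H0. lra.
Qed.

Theorem theorem1 (a : Z -> R) (d : R) :
  almost_periodic_set a ->
  has_density a d ->
  (forall n : Z, a n <= a (n + 1)%Z) ->
  exists phi : Z -> R,
    (forall n : Z, a n = IZR n / d + phi n) /\ almost_periodic_map phi.
Proof.
  intros [LF AP] Hd Hm.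
  destruct (i_exists a LF Hm) as [i S].
  assert (Abnd : forall e tau H, 0 < e ->
     (forall x, (i (x + tau - e)%R <= i x + H)%Z) ->
     (forall x, (i x + H <= i (x + tau + 5 * e)%R)%Z) ->
     forall n, a n + tau - e <= a (n + H)%Z < a n + tau + 6 * e).
  { intros e tau H He P1 P2 n. split.
    - apply S. pose proof (P1 (a n)). assert (i (a n) <= n)%Z by (apply S; lra). lia.
    - assert (n < i (a n + e)%R)%Z.
      { destruct (Z_lt_le_dec n (i (a n + e)%R)); auto. apply S in l. lra. }
      pose proof (P2 (a n + e)).
      destruct (Rlt_dec (a (n + H)%Z) (a n + tau + 6 * e)); auto.
      assert (Hq : a n + e + tau + 5 * e <= a (n + H)%Z) by lra. apply S in Hq. lia. }
  assert (dpos : 0 < d).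
  { destruct (AP 1 ltac:(lra)) as [L [HL HT]].
    destruct (HT 2) as [tau [Ht Hap]].
    destruct (KEY a i 1 tau S ltac:(lra) Hap) as [H [P1 P2]].
    pose proof (Abnd 1 tau H ltac:(lra) P1 P2 0%Z) as [Hb _].
    assert (Hpos : (1 <= H)%Z).
    { destruct (Z_le_gt_dec 1 H); auto.
      assert (a (0 + H)%Z <= a 0%Z) by (apply (mono_a a Hm); lia). lra. }
    assert (P2' : forall x, (i x + H <= i (x + (tau + 5 * 1))%R)%Z)
      by (intro x; replace (x + (tau + 5 * 1)) with (x + tau + 5 * 1) by ring; apply P2).
    pose proof (DENS a i d H (tau + 5 * 1) Hd S P2').
    apply IZR_le in Hpos.
    destruct (Rlt_le_dec 0 d); auto.
    assert (d * (tau + 5 * 1) <= 0).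
    { replace (d * (tau + 5 * 1)) with (- ((- d) * (tau + 5 * 1))) by ring.
      assert (0 <= (- d) * (tau + 5 * 1)) by (apply Rmult_le_pos; lra). lra. }
    lra. }
  exists (fun n => a n - IZR n / d). split.
  { intro n. ring. }
  intros eps Heps.
  set (e := eps / 8).
  assert (He : 0 < e) by (unfold e; lra).
  destruct (AP e He) as [L [HL HT]].
  destruct (archimed (d * (L + 6 * e))) as [Hup _].
  assert (Hdpos : 0 < d * (L + 6 * e)) by (apply Rmult_lt_0_compat; lra).
  exists (up (d * (L + 6 * e)) + 1)%Z.
  split.
  { assert (0 < up (d * (L + 6 * e)))%Z by (apply lt_IZR; simpl; lra). lia. }
  intro m.
  destruct (HT (IZR m / d + e)) as [tau [Ht Hap]].
  destruct (KEY a i e tau S He Hap) as [H [P1 P2]].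
  assert (P2' : forall x, (i x + H <= i (x + (tau + 5 * e))%R)%Z)
    by (intro x; replace (x + (tau + 5 * e)) with (x + tau + 5 * e) by ring; apply P2).
  pose proof (DENS a i d H (tau + 5 * e) Hd S P2') as D1.
  pose proof (DENS2 a i d H (tau - e) Hd S ltac:(intro x; pose proof (P1 x);
     replace (x + (tau - e)) with (x + tau - e) by ring; auto)) as D2.
  exists H. split.
  - assert (Hm1 : IZR m < IZR H).
    { assert (d * (tau - e) > d * (IZR m / d)) by (apply Rmult_lt_compat_l; lra).
      replace (d * (IZR m / d)) with (IZR m) in H0 by (field; lra). lra. }
    assert (Hm2 : IZR H < IZR (m + (up (d * (L + 6 * e)) + 1))).
    { rewrite plus_IZR, plus_IZR.
      assert (d * (tau + 5 * e) < d * (IZR m / d + e + L + 5 * e)) by (apply Rmult_lt_compat_l; lra).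
      replace (d * (IZR m / d + e + L + 5 * e)) with (IZR m + d * (L + 6 * e)) in H0 by (field; lra).
      simpl. lra. }
    apply lt_IZR in Hm1. apply lt_IZR in Hm2. lia.
  - exists (7 * e). split; [unfold e; lra|].
    intro n.
    pose proof (Abnd e tau H He P1 P2 n) as [B1 B2].
    assert (Q1 : tau - e <= IZR H / d).
    { replace (tau - e) with (d * (tau - e) * / d) by (field; lra).
      unfold Rdiv. apply Rmult_le_compat_r; [left; apply Rinv_0_lt_compat; lra| lra]. }
    assert (Q2 : IZR H / d <= tau + 5 * e).
    { replace (tau + 5 * e) with (d * (tau + 5 * e) * / d) by (field; lra).
      unfold Rdiv. apply Rmult_le_compat_r; [left; apply Rinv_0_lt_compat; lra| lra]. }
    apply Rabs_le.
    replace (a (n + H)%Z - IZR (n + H) / d - (a n - IZR n / d))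
      with (a (n + H)%Z - a n - IZR H / d) by (rewrite plus_IZR; field; lra).
    lra.
Qed.
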